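(* (a) For an integer $k\ge2$, let $P_k(x)=-\left(x+\frac{k-1}{2}\right)\left(x-\frac{k-1}{2}\right)\prod_{i=1}^{k-1}\left(x-\left(i-\frac k2\right)\right)^2$, $r_0=\frac{1-k}{2}$, $r_1=\frac{k-1}{2}$, $Z_k=(X_k,Y_k)$ with $X_k(x,y)=(1,P_k'(x))$ for $y\ge0$, $Y_k(x,y)=(-1,P_k'(x))$ for $y\le0$, and $\Lambda_k=\{(x,P_k(x)):r_0\le x\le r_1\}\cup\{(x,-P_k(x)):r_0\le x\le r_1\}$. Then $\Lambda_k$ is an invariant set for $Z_k$. (b) Let $Z_\infty$ have $X_\infty(x,y)=(1,2\sin(2\pi x))$ for $y\ge0$, $Y_\infty(x,y)=(-1,2\sin(2\pi x))$ for $y\le0$, and $\Lambda_\infty=\{(x,\pm P_\infty(x)):x\in\mathbb{R}\}$ with $P_\infty(x)=\frac{1-\cos(2\pi x)}{\pi}$. Then $\Lambda_\infty$ is an invariant set for $Z_\infty$.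
   Context: Switching manifold $\Sigma=\{y=0\}=f^{-1}(0)$, $f(x,y)=y$; a PSVF $Z=(X,Y)$ uses $X$ on $\{y\ge0\}$, $Y$ on $\{y\le0\}$. With $Wf=\langle\nabla f,W\rangle$, $W^2f=\langle\nabla(Wf),W\rangle$: crossing region $\Sigma^c=\{Xf\cdot Yf>0\}$ ($\Sigma^{c+}$ both $>0$, $\Sigma^{c-}$ both $<0$), sliding $\Sigma^s=\{Xf<0<Yf\}$, escaping $\Sigma^e=\{Yf<0<Xf\}$, sliding field $Z^T=(Yf\,X-Xf\,Y)/(Yf-Xf)$ on their closure. Tangential singularities: points of $\Sigma$ with $Xf=0$ or $Yf=0$; singular if invisible for both fields ($X^2f<0$ and $Y^2f>0$), regular otherwise. Local trajectories (Filippov convention): off $\Sigma$ follow $X$ or $Y$; through $\Sigma^{c+}$ follow $Y$ for $t\le0$ and $X$ for $t\ge0$ (reversed for $\Sigma^{c-}$); through $\Sigma^e$ follow $Z^T$ for $t\le0$ and one of $X,Y,Z^T$ for $t\ge0$ (reversed for $\Sigma^s$); through a regular tangency follow one of the flows of $X,Y,Z^T$ for $t\le0$ and one of them for $t\ge0$; singular tangencies are stationary. A global trajectory is a map $\gamma:\mathbb{R}\to\mathbb{R}^2$ concatenating orientation-preserving local trajectories $\sigma_i$ on $[t_i,t_{i+1}]$, $i\in\mathbb{Z}$, with $\sigma_i(t_{i+1})=\sigma_{i+1}(t_{i+1})$ and $t_i\to\pm\infty$. A set $\Lambda$ is invariant for $Z$ if every global trajectory $\gamma$ of $Z$ with $\gamma(0)\in\Lambda$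 satisfies $\gamma(\mathbb{R})\subset\Lambda$. *)

(* Defs.v *)
From Stdlib Require Import Reals Lra ZArith.
From Coquelicot Require Import Coquelicot.
Open Scope R_scope.

Definition pt := (R * R)%type.
Definition vfield := pt -> pt.

(* A piecewise smooth vector field Z = (X, Y) with switching manifold
   Sigma = {y = 0} = f^{-1}(0), f(x,y) = y:
   X is used on {y >= 0}, Y on {y <= 0}. *)
Record PSVF := mkPSVF { fX : vfield ; fY : vfield }.

(* W f = <grad f, W> with f(x,y) = y. *)
Definition Lie1 (W : vfield) (p : pt) : R := snd (W p).

(* W^2 f = <grad (W f), W>. *)
Definition Lie2 (W : vfield) (p : pt) : R :=
  Derive (fun x => Lie1 W (x, snd p)) (fst p) * fst (W p)
  + Derive (fun y => Lie1 W (fst p, y)) (snd p) * snd (W p).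

Definition onSigma (p : pt) : Prop := snd p = 0.

Definition crossing_plus (Z : PSVF) (p : pt) : Prop :=
  onSigma p /\ Lie1 (fX Z) p > 0 /\ Lie1 (fY Z) p > 0.
Definition crossing_minus (Z : PSVF) (p : pt) : Prop :=
  onSigma p /\ Lie1 (fX Z) p < 0 /\ Lie1 (fY Z) p < 0.
Definition sliding (Z : PSVF) (p : pt) : Prop :=
  onSigma p /\ Lie1 (fX Z) p < 0 /\ 0 < Lie1 (fY Z) p.
Definition escaping (Z : PSVF) (p : pt) : Prop :=
  onSigma p /\ Lie1 (fY Z) p < 0 /\ 0 < Lie1 (fX Z) p.

(* closure (in R^2) of Sigma^s \cup Sigma^e *)
Definition in_closure_se (Z : PSVF) (p : pt) : Prop :=
  forall eps, eps > 0 -> exists q : pt,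
    (sliding Z q \/ escaping Z q) /\
    Rabs (fst q - fst p) < eps /\ Rabs (snd q - snd p) < eps.

Definition slidingField (Z : PSVF) : vfield := fun p =>
  let a := Lie1 (fY Z) p in
  let b := Lie1 (fX Z) p in
  ((a * fst (fX Z p) - b * fst (fY Z p)) / (a - b),
   (a * snd (fX Z p) - b * snd (fY Z p)) / (a - b)).

Definition tangency (Z : PSVF) (p : pt) : Prop :=
  onSigma p /\ (Lie1 (fX Z) p = 0 \/ Lie1 (fY Z) p = 0).
Definition singular_tangency (Z : PSVF) (p : pt) : Prop :=
  tangency Z p /\ Lie2 (fX Z) p < 0 /\ Lie2 (fY Z) p > 0.
Definition regular_tangency (Z : PSVF) (p : pt) : Prop :=
  tangency Z p /\ ~ (Lie2 (fX Z) p < 0 /\ Lie2 (fY Z) p > 0).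

(* g has derivative g' at every point of [a,b] (one-sided at the ends). *)
Definition deriv_on (g g' : R -> R) (a b : R) : Prop :=
  forall t, a <= t <= b -> forall eps, eps > 0 -> exists delta, delta > 0 /\
    forall u, a <= u <= b -> u <> t -> Rabs (u - t) < delta ->
      Rabs ((g u - g t) / (u - t) - g' t) < eps.

Definition integral_curve (W : vfield) (sigma : R -> pt) (a b : R) : Prop :=
  deriv_on (fun t => fst (sigma t)) (fun t => fst (W (sigma t))) a b /\
  deriv_on (fun t => snd (sigma t)) (fun t => snd (W (sigma t))) a b.

Definition followsX (Z : PSVF) sigma a b : Prop :=
  integral_curve (fX Z) sigma a b /\ (forall t, a <= t <= b -> snd (sigma t) >= 0).
Definition followsY (Z : PSVF) sigma a b : Prop :=
  integral_curve (fY Z) sigma a b /\ (forall t, a <= t <= b -> snd (sigma t) <= 0).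
Definition followsT (Z : PSVF) sigma a b : Prop :=
  integral_curve (slidingField Z) sigma a b /\
  (forall t, a <= t <= b -> in_closure_se Z (sigma t)).
Definition followsAny (Z : PSVF) sigma a b : Prop :=
  followsX Z sigma a b \/ followsY Z sigma a b \/ followsT Z sigma a b.

(* Local trajectory (Filippov convention) on [a,b], through the point
   p = sigma s for some s in [a,b]. *)
Definition local_trajectory (Z : PSVF) (sigma : R -> pt) (a b : R) : Prop :=
  exists s, a <= s <= b /\
  let p := sigma s in
  (snd p > 0 /\ followsX Z sigma a b) \/
  (snd p < 0 /\ followsY Z sigma a b) \/
  (crossing_plus Z p /\ followsY Z sigma a s /\ followsX Z sigma s b) \/
  (crossing_minus Z p /\ followsX Z sigma a s /\ followsY Z sigma s b) \/
  (escaping Z p /\ followsT Z sigma a s /\ followsAny Z sigma s b) \/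
  (sliding Z p /\ followsAny Z sigma a s /\ followsT Z sigma s b) \/
  (regular_tangency Z p /\ followsAny Z sigma a s /\ followsAny Z sigma s b) \/
  (singular_tangency Z p /\ (forall t, a <= t <= b -> sigma t = p)).

Definition global_trajectory (ZZ : PSVF) (gamma : R -> pt) : Prop :=
  exists (ts : Z -> R) (sig : Z -> R -> pt),
    (forall i, ts i < ts (i + 1)%Z) /\
    (forall M, exists N, forall i, (N <= i)%Z -> ts i > M) /\
    (forall M, exists N, forall i, (i <= N)%Z -> ts i < M) /\
    (forall i, local_trajectory ZZ (sig i) (ts i) (ts (i + 1)%Z)) /\
    (forall i, sig i (ts (i + 1)%Z) = sig (i + 1)%Z (ts (i + 1)%Z)) /\
    (forall i t, ts i <= t <= ts (i + 1)%Z -> gamma t = sig i t).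

Definition invariant (Z : PSVF) (L : pt -> Prop) : Prop :=
  forall gamma, global_trajectory Z gamma -> L (gamma 0) -> forall t, L (gamma t).

Fixpoint prod1 (n : nat) (g : nat -> R) : R :=
  match n with O => 1 | S m => prod1 m g * g n end.

Definition Pk (k : nat) (x : R) : R :=
  - ((x + (INR k - 1) / 2) * (x - (INR k - 1) / 2))
  * prod1 (k - 1) (fun i => (x - (INR i - INR k / 2)) ^ 2).

Definition r0 (k : nat) : R := (1 - INR k) / 2.
Definition r1 (k : nat) : R := (INR k - 1) / 2.

Definition Zk (k : nat) : PSVF :=
  mkPSVF (fun p => (1, Derive (Pk k) (fst p)))
         (fun p => (-1, Derive (Pk k) (fst p))).

Definition Lambdak (k : nat) (p : pt) : Prop :=
  exists x, r0 k <= x <= r1 k /\ (p = (x, Pk k x) \/ p = (x, - Pk k x)).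

Definition Pinf (x : R) : R := (1 - cos (2 * PI * x)) / PI.

Definition Zinf : PSVF :=
  mkPSVF (fun p => (1, 2 * sin (2 * PI * fst p)))
         (fun p => (-1, 2 * sin (2 * PI * fst p))).

Definition Lambdainf (p : pt) : Prop :=
  exists x, p = (x, Pinf x) \/ p = (x, - Pinf x).

(* Main.v *)
Require Import Defs.
From Stdlib Require Import Reals ZArith Lra Lia.
From Coquelicot Require Import Coquelicot.
Open Scope R_scope.

Definition clampab (a b t : R) := Rmax a (Rmin b t).

Lemma clamp_lip a b x t : a <= b -> Rabs (clampab a b x - clampab a b t) <= Rabs (x - t).
Proof. intros; unfold clampab, Rmax, Rmin; repeat destruct Rle_dec; unfold Rabs;
  repeat destruct Rcase_abs; lra. Qed.

Lemma clamp_in a b t : a <= t <= b -> clampab a b t = t.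
Proof. intros; unfold clampab, Rmax, Rmin; repeat destruct Rle_dec; lra. Qed.

Lemma clamp_rng a b t : a <= b -> a <= clampab a b t <= b.
Proof. intros; unfold clampab, Rmax, Rmin; repeat destruct Rle_dec; lra. Qed.

Lemma deriv_on_zero_const f a b : deriv_on f (fun _ => 0) a b ->
  forall t, a <= t <= b -> f t = f a.
Proof.
  intros Hd t Ht.
  set (F := fun x => f (clampab a b x)).
  assert (Hab : a <= b) by lra.
  assert (HF : forall x, a <= x <= b -> F x = f x).
  { intros x Hx; unfold F; now rewrite clamp_in. }
  assert (Hder : forall x, a < x < b -> derivable_pt_lim F x 0).
  { intros x Hx eps Heps.
    destruct (Hd x (conj (Rlt_le _ _ (proj1 Hx)) (Rlt_le _ _ (proj2 Hx))) eps Heps) as [d [Hd0 Hd1]].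
    assert (Hpos : 0 < Rmin d (Rmin (x - a) (b - x))).
    { repeat apply Rmin_pos; lra. }
    exists (mkposreal _ Hpos); simpl; intros h Hh Hhd.
    assert (Hh1 := Rmin_l d (Rmin (x - a) (b - x))).
    assert (Hh2 := Rmin_r d (Rmin (x - a) (b - x))).
    assert (Hh3 := Rmin_l (x - a) (b - x)).
    assert (Hh4 := Rmin_r (x - a) (b - x)).
    assert (Hxh : a <= x + h <= b) by (unfold Rabs in Hhd; destruct Rcase_abs; lra).
    rewrite (HF _ Hxh), (HF x) by lra.
    specialize (Hd1 (x + h) Hxh).
    replace (x + h - x) with h in Hd1 by ring.
    apply Hd1; [lra | lra]. }
  assert (Hcont : forall x, a <= x <= b -> continuity_pt F x).
  { intros x Hx eps Heps.
    destruct (Hd x Hx 1 Rlt_0_1) as [d [Hd0 Hd1]].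
    exists (Rmin d eps); split; [apply Rmin_pos; lra|].
    intros y [_ Hy]; simpl in *; unfold R_dist in *.
    assert (Hm1 := Rmin_l d eps). assert (Hm2 := Rmin_r d eps).
    unfold F; rewrite (clamp_in a b x Hx).
    assert (Hl := clamp_lip a b y x Hab). rewrite (clamp_in a b x Hx) in Hl.
    set (u := clampab a b y) in *.
    assert (Hu := clamp_rng a b y Hab). fold u in Hu.
    destruct (Req_dec u x) as [E|E].
    - rewrite E, Rminus_diag, Rabs_R0; lra.
    - assert (Hq := Hd1 u Hu E ltac:(lra)).
      rewrite Rminus_0_r in Hq.
      assert (Hux : 0 < Rabs (u - x)) by (apply Rabs_pos_lt; lra).
      unfold Rdiv in Hq; rewrite Rabs_mult, Rabs_inv in Hq.
      apply Rmult_lt_compat_r with (r := Rabs (u - x)) in Hq; [|lra].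
      rewrite Rmult_assoc, Rinv_l, Rmult_1_r, Rmult_1_l in Hq by lra.
      lra. }
  assert (pr : forall x, a < x < b -> derivable_pt F x).
  { intros x Hx; exists 0; apply Hder; exact Hx. }
  assert (H := null_derivative_loc F a b pr Hcont).
  rewrite <- (HF t Ht), <- (HF a) by lra.
  apply H; [|exact Ht].
  intros x P. unfold derive_pt. destruct (pr x P) as [l Hl]. simpl.
  apply (uniqueness_limite F x); [exact Hl | apply Hder; exact P].
Qed.

Lemma deriv_on_minus f f' g g' a b : deriv_on f f' a b -> deriv_on g g' a b ->
  deriv_on (fun t => f t - g t) (fun t => f' t - g' t) a b.
Proof.
  intros Hf Hg t Ht eps Heps.
  destruct (Hf t Ht (eps/2)) as [d1 [H1 H1']]; [lra|].
  destruct (Hg t Ht (eps/2)) as [d2 [H2 H2']]; [lra|].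
  exists (Rmin d1 d2); split; [apply Rmin_pos; lra|].
  intros u Hu Hut Hd.
  assert (Hm1 := Rmin_l d1 d2). assert (Hm2 := Rmin_r d1 d2).
  specialize (H1' u Hu Hut ltac:(lra)). specialize (H2' u Hu Hut ltac:(lra)).
  replace ((f u - g u - (f t - g t)) / (u - t) - (f' t - g' t)) with
    (((f u - f t) / (u - t) - f' t) - ((g u - g t) / (u - t) - g' t))
    by (field; intro; apply Hut; lra).
  eapply Rle_lt_trans; [apply Rabs_triang|]. rewrite Rabs_Ropp. lra.
Qed.

Lemma deriv_on_ext f f' f'' a b : deriv_on f f' a b ->
  (forall t, a <= t <= b -> f' t = f'' t) -> deriv_on f f'' a b.
Proof.
  intros Hf He t Ht eps Heps. rewrite <- (He t Ht). now apply Hf.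
Qed.

Lemma deriv_on_is_derive f f' a b : (forall t, is_derive f t (f' t)) -> deriv_on f f' a b.
Proof.
  intros Hd t Ht eps Heps.
  destruct (proj1 (is_derive_Reals f t (f' t)) (Hd t) eps Heps) as [d Hd'].
  exists d; split; [apply cond_pos|].
  intros u Hu Hut Hud.
  specialize (Hd' (u - t) ltac:(lra) Hud).
  replace (t + (u - t)) with u in Hd' by ring. exact Hd'.
Qed.

Lemma deriv_on_opp f f' a b : deriv_on f f' a b -> deriv_on (fun t => - f t) (fun t => - f' t) a b.
Proof.
  intros Hf t Ht eps Heps. destruct (Hf t Ht eps Heps) as [d [H1 H2]].
  exists d; split; [exact H1|]. intros u Hu Hut Hd.
  replace ((- f u - - f t) / (u - t) - - f' t) with (- ((f u - f t) / (u - t) - f' t))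
    by (field; intro; apply Hut; lra).
  rewrite Rabs_Ropp. now apply H2.
Qed.

Section Abs.
Variables (P g : R -> R) (D : R -> Prop).
Hypothesis HP : forall x, is_derive P x (g x).
Hypothesis HD : forall x, D x <-> 0 <= P x.

Definition ZZ := mkPSVF (fun p => (1, g (fst p))) (fun p => (-1, g (fst p))).
Definition LL (p : pt) : Prop := exists x, D x /\ (p = (x, P x) \/ p = (x, - P x)).

Definition Good (sigma : R -> pt) c d :=
  forall t0, c <= t0 <= d -> LL (sigma t0) -> forall t, c <= t <= d -> LL (sigma t).

Lemma LL_up p : LL p -> snd p >= 0 -> snd p - P (fst p) = 0.
Proof.
  intros [x [Hx [E|E]]] Hs; subst p; simpl in *; [ring|].
  apply HD in Hx; lra.
Qed.
Lemma LL_dn p : LL p -> snd p <= 0 -> snd p + P (fst p) = 0.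
Proof.
  intros [x [Hx [E|E]]] Hs; subst p; simpl in *; [|ring].
  apply HD in Hx; lra.
Qed.
Lemma up_LL p : snd p >= 0 -> snd p - P (fst p) = 0 -> LL p.
Proof.
  destruct p as [x y]; simpl; intros H1 H2; exists x; split.
  - apply HD; lra.
  - left; f_equal; lra.
Qed.
Lemma dn_LL p : snd p <= 0 -> snd p + P (fst p) = 0 -> LL p.
Proof.
  destruct p as [x y]; simpl; intros H1 H2; exists x; split.
  - apply HD; lra.
  - right; f_equal; lra.
Qed.

Lemma goodX sigma c d : followsX ZZ sigma c d -> Good sigma c d.
Proof.
  intros [[Hx Hy] Hpos] t0 Ht0 HL t Ht.
  simpl in Hx, Hy.
  assert (Hxt : forall t, c <= t <= d -> fst (sigma t) = fst (sigma c) + (t - c)).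
  { intros s Hs.
    assert (Hid : deriv_on (fun t => t - c) (fun _ => 1) c d).
    { apply deriv_on_is_derive; intro; auto_derive; auto; ring. }
    assert (H := deriv_on_minus _ _ _ _ _ _ Hx Hid).
    apply deriv_on_ext with (f'' := fun _ => 0) in H; [|intros; ring].
    apply deriv_on_zero_const with (t := s) in H; [|exact Hs]. simpl in H. lra. }
  assert (HQ : deriv_on (fun t => P (fst (sigma c) + (t - c)))
                 (fun t => g (fst (sigma t))) c d).
  { apply deriv_on_ext with (f' := fun t => g (fst (sigma c) + (t - c))).
    - apply deriv_on_is_derive; intro s.
      assert (D1 : is_derive (fun t => fst (sigma c) + (t - c)) s 1) by (auto_derive; auto; ring).
      assert (K := is_derive_comp P _ s _ _ (HP _) D1).
      unfold scal in K; simpl in K; unfold mult in K; simpl in K.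
      replace (1 * g (fst (sigma c) + (s - c))) with (g (fst (sigma c) + (s - c))) in K by ring.
      exact K.
    - intros s Hs; now rewrite (Hxt s Hs). }
  assert (H := deriv_on_minus _ _ _ _ _ _ Hy HQ).
  apply deriv_on_ext with (f'' := fun _ => 0) in H; [|intros; ring].
  assert (E : forall s, c <= s <= d -> snd (sigma s) - P (fst (sigma s)) =
                                      snd (sigma c) - P (fst (sigma c))).
  { intros s Hs. rewrite (Hxt s Hs).
    assert (H' := deriv_on_zero_const _ _ _ H s Hs). simpl in H'.
    replace (fst (sigma c) + (c - c)) with (fst (sigma c)) in H' by ring. exact H'. }
  apply up_LL; [now apply Hpos|].
  rewrite E by exact Ht. rewrite <- (E t0 Ht0).
  apply LL_up; [exact HL | now apply Hpos].
Qed.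

Lemma goodY sigma c d : followsY ZZ sigma c d -> Good sigma c d.
Proof.
  intros [[Hx Hy] Hpos] t0 Ht0 HL t Ht.
  simpl in Hx, Hy.
  assert (Hxt : forall t, c <= t <= d -> fst (sigma t) = fst (sigma c) - (t - c)).
  { intros s Hs.
    assert (Hid : deriv_on (fun t => -(t - c)) (fun _ => -1) c d).
    { apply deriv_on_is_derive; intro; auto_derive; auto; ring. }
    assert (H := deriv_on_minus _ _ _ _ _ _ Hx Hid).
    apply deriv_on_ext with (f'' := fun _ => 0) in H; [|intros; ring].
    apply deriv_on_zero_const with (t := s) in H; [|exact Hs]. simpl in H. lra. }
  assert (HQ : deriv_on (fun t => - P (fst (sigma c) - (t - c)))
                 (fun t => g (fst (sigma t))) c d).
  { apply deriv_on_ext with (f' := fun t => - (g (fst (sigma c) - (t - c)) * (-1))).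
    - apply deriv_on_opp with (f := fun t => P (fst (sigma c) - (t - c)))
        (f' := fun t => g (fst (sigma c) - (t - c)) * (-1)).
      apply deriv_on_is_derive; intro s.
      assert (D1 : is_derive (fun t => fst (sigma c) - (t - c)) s (-1)) by (auto_derive; auto; ring).
      assert (K := is_derive_comp P _ s _ _ (HP _) D1).
      unfold scal in K; simpl in K; unfold mult in K; simpl in K.
      replace (-1 * g (fst (sigma c) - (s - c))) with (g (fst (sigma c) - (s - c)) * -1) in K by ring.
      exact K.
    - intros s Hs; rewrite (Hxt s Hs); ring. }
  assert (H := deriv_on_minus _ _ _ _ _ _ Hy HQ).
  apply deriv_on_ext with (f'' := fun _ => 0) in H; [|intros; ring].
  assert (E : forall s, c <= s <= d -> snd (sigma s) + P (fst (sigma s)) =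
                                      snd (sigma c) + P (fst (sigma c))).
  { intros s Hs. rewrite (Hxt s Hs).
    assert (H' := deriv_on_zero_const _ _ _ H s Hs). simpl in H'.
    replace (fst (sigma c) - (c - c)) with (fst (sigma c)) in H' by ring. lra. }
  apply dn_LL; [now apply Hpos|].
  rewrite E by exact Ht. rewrite <- (E t0 Ht0).
  apply LL_dn; [exact HL | now apply Hpos].
Qed.

Lemma goodT sigma c d : followsT ZZ sigma c d -> Good sigma c d.
Proof.
  intros [_ Hc] t0 Ht0. exfalso.
  destruct (Hc t0 Ht0 1 Rlt_0_1) as [q [[[_ [H1 H2]]|[_ [H1 H2]]] _]];
    unfold Lie1 in *; simpl in *; lra.
Qed.

Lemma goodAny sigma c d : followsAny ZZ sigma c d -> Good sigma c d.
Proof.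
  intros [H|[H|H]]; [now apply goodX | now apply goodY | now apply goodT].
Qed.

Lemma good_cat sigma a s b : a <= s <= b -> Good sigma a s -> Good sigma s b -> Good sigma a b.
Proof.
  intros Hs H1 H2 t0 Ht0 HL t Ht.
  assert (Ls : LL (sigma s)).
  { destruct (Rle_dec t0 s).
    - apply (H1 t0 ltac:(lra) HL); lra.
    - apply (H2 t0 ltac:(lra) HL); lra. }
  destruct (Rle_dec t s).
  - apply (H1 s ltac:(lra) Ls); lra.
  - apply (H2 s ltac:(lra) Ls); lra.
Qed.

Lemma good_local sigma a b : local_trajectory ZZ sigma a b -> Good sigma a b.
Proof.
  intros [s [Hs H]]. cbv zeta in H.
  destruct H as [[_ H]|[[_ H]|[[_ [H1 H2]]|[[_ [H1 H2]]|[[_ [H1 H2]]|[[_ [H1 H2]]|[[_ [H1 H2]]|[_ H]]]]]]]].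
  - now apply goodX.
  - now apply goodY.
  - apply (good_cat _ a s b Hs); [now apply goodY | now apply goodX].
  - apply (good_cat _ a s b Hs); [now apply goodX | now apply goodY].
  - apply (good_cat _ a s b Hs); [now apply goodT | now apply goodAny].
  - apply (good_cat _ a s b Hs); [now apply goodAny | now apply goodT].
  - apply (good_cat _ a s b Hs); [now apply goodAny | now apply goodAny].
  - intros t0 Ht0 HL t Ht. rewrite (H t Ht). rewrite (H t0 Ht0) in HL. exact HL.
Qed.

Lemma cover (ts : Z -> R) :
  (forall i, ts i < ts (i + 1)%Z) ->
  (forall M, exists N, forall i, (N <= i)%Z -> ts i > M) ->
  (forall M, exists N, forall i, (i <= N)%Z -> ts i < M) ->
  forall t, exists j, ts j <= t <= ts (j + 1)%Z.
Proof.
  intros Hinc Hp Hm t.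
  destruct (Hp t) as [N1 H1]. destruct (Hm t) as [N2 H2].
  assert (K : forall n : nat, ts (N2 + Z.of_nat n)%Z > t -> exists j, ts j <= t <= ts (j + 1)%Z).
  { induction n as [|n IH]; intros Hn.
    - exfalso. specialize (H2 N2 (Z.le_refl _)). rewrite Z.add_0_r in Hn. lra.
    - destruct (Rle_dec (ts (N2 + Z.of_nat n)%Z) t).
      + exists (N2 + Z.of_nat n)%Z. split; [lra|].
        replace (N2 + Z.of_nat n + 1)%Z with (N2 + Z.of_nat (S n))%Z by lia. lra.
      + apply IH; lra. }
  apply (K (Z.to_nat (Z.max N1 N2 - N2))).
  apply H1. lia.
Qed.

Lemma abstract_inv : invariant ZZ LL.
Proof.
  intros gamma [ts [sig [Hinc [Hp [Hm [Hloc [Hcat Hg]]]]]]] H0 t.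
  assert (G : forall i, Good (sig i) (ts i) (ts (i + 1)%Z)) by (intro; now apply good_local).
  destruct (cover ts Hinc Hp Hm 0) as [i0 Hi0].
  assert (L0 : LL (sig i0 0)) by (now rewrite <- (Hg i0 0 Hi0)).
  assert (Up : forall n : nat, forall s, ts (i0 + Z.of_nat n)%Z <= s <= ts (i0 + Z.of_nat n + 1)%Z ->
                 LL (sig (i0 + Z.of_nat n)%Z s)).
  { induction n as [|n IH].
    - rewrite Z.add_0_r. intros s Hs. apply (G i0 0 Hi0 L0 s Hs).
    - replace (i0 + Z.of_nat (S n))%Z with (i0 + Z.of_nat n + 1)%Z by lia.
      intros s Hs.
      assert (HL : LL (sig (i0 + Z.of_nat n + 1)%Z (ts (i0 + Z.of_nat n + 1)%Z))).
      { rewrite <- Hcat. apply IH. specialize (Hinc (i0 + Z.of_nat n)%Z). lra. }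
      apply (G _ _ (conj (Rle_refl _) (Rlt_le _ _ (Hinc _))) HL s Hs). }
  assert (Dn : forall n : nat, forall s, ts (i0 - Z.of_nat n)%Z <= s <= ts (i0 - Z.of_nat n + 1)%Z ->
                 LL (sig (i0 - Z.of_nat n)%Z s)).
  { induction n as [|n IH].
    - rewrite Z.sub_0_r. intros s Hs. apply (G i0 0 Hi0 L0 s Hs).
    - intros s Hs.
      set (j := (i0 - Z.of_nat (S n))%Z) in *.
      assert (Ej : (j + 1)%Z = (i0 - Z.of_nat n)%Z) by (unfold j; lia).
      assert (HL : LL (sig j (ts (j + 1)%Z))).
      { rewrite Hcat. rewrite Ej. apply IH. rewrite <- Ej. specialize (Hinc (j+1)%Z). lra. }
      apply (G _ _ (conj (Rlt_le _ _ (Hinc _)) (Rle_refl _)) HL s Hs). }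
  destruct (cover ts Hinc Hp Hm t) as [j Hj].
  rewrite (Hg j t Hj).
  destruct (Z.le_gt_cases i0 j).
  - replace j with (i0 + Z.of_nat (Z.to_nat (j - i0)))%Z in * by lia. now apply Up.
  - replace j with (i0 - Z.of_nat (Z.to_nat (i0 - j)))%Z in * by lia. now apply Dn.
Qed.
End Abs.

Lemma prod1_nonneg n g : (forall i, g i >= 0) -> prod1 n g >= 0.
Proof.
  intros H; induction n; simpl; [lra|].
  specialize (H (S n)). apply Rle_ge, Rmult_le_pos; lra.
Qed.

Lemma prod1_pos n g : (forall i, (1 <= i <= n)%nat -> g i > 0) -> prod1 n g > 0.
Proof.
  induction n; intros H; simpl; [lra|].
  apply Rmult_lt_0_compat; [apply IHn; intros; apply H; lia | apply H; lia].
Qed.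

Lemma prod1_ex_derive k n x :
  ex_derive (fun x => prod1 n (fun i => (x - (INR i - INR k / 2)) ^ 2)) x.
Proof.
  induction n; simpl.
  - apply ex_derive_const.
  - apply ex_derive_mult; [exact IHn|]. auto_derive; auto.
Qed.

Lemma Pk_derive k x : is_derive (Pk k) x (Derive (Pk k) x).
Proof.
  apply Derive_correct. unfold Pk.
  apply ex_derive_mult; [auto_derive; auto | apply prod1_ex_derive].
Qed.

Lemma Pk_sign k x : (2 <= k)%nat -> (r0 k <= x <= r1 k <-> 0 <= Pk k x).
Proof.
  intros Hk. unfold Pk, r0, r1.
  assert (Hk' : 2 <= INR k) by (apply (le_INR 2 k) in Hk; simpl in Hk; lra).
  split.
  - intros Hx.
    apply Rmult_le_pos.
    + assert (0 <= (x + (INR k - 1) / 2)) by lra.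
      assert ((x - (INR k - 1) / 2) <= 0) by lra.
      assert (0 <= (x + (INR k - 1) / 2) * - (x - (INR k - 1) / 2)) by (apply Rmult_le_pos; lra).
      lra.
    + apply Rge_le, prod1_nonneg. intro i. apply Rle_ge, pow2_ge_0.
  - intros H. destruct (Rle_dec ((1 - INR k)/2) x) as [h1|h1];
      destruct (Rle_dec x ((INR k - 1)/2)) as [h2|h2]; [lra| | |]; exfalso;
    (assert (Q : prod1 (k - 1) (fun i => (x - (INR i - INR k / 2)) ^ 2) > 0);
     [ apply prod1_pos; intros i Hi;
       assert (Hi1 : 1 <= INR i) by (apply (le_INR 1 i); lia);
       assert (Hi2 : INR i + 1 <= INR k)
         by (rewrite <- S_INR; apply le_INR; lia);
       apply pow2_gt_0; lra
     | ]).
    + assert (0 < (x + (INR k - 1) / 2) * (x - (INR k - 1) / 2)) by (apply Rmult_lt_0_compat; lra).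
      assert (0 < (x + (INR k - 1) / 2) * (x - (INR k - 1) / 2) * prod1 (k - 1) (fun i => (x - (INR i - INR k / 2)) ^ 2))
        by (apply Rmult_lt_0_compat; lra).
      lra.
    + assert (0 < -(x + (INR k - 1) / 2) * -(x - (INR k - 1) / 2)) by (apply Rmult_lt_0_compat; lra).
      assert (0 < -(x + (INR k - 1) / 2) * -(x - (INR k - 1) / 2) * prod1 (k - 1) (fun i => (x - (INR i - INR k / 2)) ^ 2))
        by (apply Rmult_lt_0_compat; lra).
      nra.
    + lra.
Qed.

Lemma invariant_iff Z L L' : invariant Z L -> (forall p, L p <-> L' p) -> invariant Z L'.
Proof.
  intros H E gamma Hg H0 t. apply E. apply (H gamma Hg). now apply E.
Qed.

Theorem mainTheorem10 :
  (forall k : nat, (2 <= k)%nat -> invariant (Zk k) (Lambdak k)) /\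
  invariant Zinf Lambdainf.
Proof.
  split.
  - intros k Hk.
    exact (abstract_inv (Pk k) (Derive (Pk k)) (fun x => r0 k <= x <= r1 k)
             (Pk_derive k) (fun x => Pk_sign k x Hk)).
  - assert (HPI := PI_RGT_0).
    apply invariant_iff with (L := LL Pinf (fun _ => True)).
    + apply (abstract_inv Pinf (fun x => 2 * sin (2 * PI * x)) (fun _ => True)).
      * intro x. unfold Pinf. auto_derive; auto. field. lra.
      * intro x. unfold Pinf. split; auto. intros _.
        assert (H := COS_bound (2 * PI * x)).
        apply Rmult_le_pos; [lra|]. left; apply Rinv_0_lt_compat; lra.
    + intro p. unfold LL, Lambdainf. split.
      * intros [x [_ H]]. now exists x.
      * intros [x H]. now exists x.
Qed.
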